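(* Let $1\le k\le n-1$ and let $\Sigma=\mathbb{S}^k\times\mathbb{R}^{n-k}\subset\mathbb{R}^{n+1}$ be a self-shrinker. Let $C\subset\mathbb{S}^k$ be an open hemisphere (the intersection of $\mathbb{S}^k$ with an open half-space of $\mathbb{R}^{k+1}$ bounded by a hyperplane through the origin), and let $H\subset\mathbb{R}^{n-k}$ be an open half-space whose boundary is an $(n-k-1)$-dimensional linear subspace. Then $C\times H\subset\Sigma$ is stable.
   Context: $\mathbb{S}^k$ is the round sphere of radius $\sqrt{2k}$ centered at the origin of $\mathbb{R}^{k+1}$. Stability operator: $Lf=\Delta f-\tfrac12\langle\vec x,\nabla f\rangle+(|A|^2+\tfrac12)f$. A region $\Omega$ is stable if there is a function $u$ with $Lu=0$ and $u>0$ on $\Omega$. *)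

(* Defs.v *)
From Stdlib Require Import Reals Lra Lia.
Open Scope R_scope.

(* Points of R^N are functions nat -> R; a point of R^{n+1} is one whose
   coordinates of index > n vanish.  Coordinates 0..k are the S^k factor
   (x), coordinates k+1..n are the R^{n-k} factor (y_j = z (k+1+j)). *)

Fixpoint sumR (m : nat) (f : nat -> R) : R :=
  match m with O => 0 | S m' => sumR m' f + f m' end.

Definition in_Rn1 (n : nat) (z : nat -> R) : Prop :=
  forall m, (n < m)%nat -> z m = 0.

Definition upd (z : nat -> R) (i : nat) (t : R) : nat -> R :=
  fun m => if Nat.eqb m i then z m + t else z m.

Definition delta (i j : nat) : R := if Nat.eqb i j then 1 else 0.

Definition vnorm (N : nat) (v : nat -> R) : R := sqrt (sumR N (fun i => v i ^ 2)).

(* Sigma = S^k_{sqrt(2k)} x R^{n-k} inside R^{n+1} *)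
Definition cylinder (n k : nat) (z : nat -> R) : Prop :=
  in_Rn1 n z /\ sumR (S k) (fun i => z i ^ 2) = 2 * INR k.

(* Sigma is the zero set of phi(z) = |x|^2 - 2k; gradient and Hessian of phi. *)
Definition phi_grad (k : nat) (z : nat -> R) (i : nat) : R :=
  if Nat.leb i k then 2 * z i else 0.
Definition phi_hess (k : nat) (i j : nat) : R :=
  if (Nat.eqb i j && Nat.leb i k)%bool then 2 else 0.

Definition nu (n k : nat) (z : nat -> R) (i : nat) : R :=
  phi_grad k z i / vnorm (S n) (phi_grad k z).

Definition proj (n k : nat) (z : nat -> R) (i j : nat) : R :=
  delta i j - nu n k z i * nu n k z j.

Definition sff (n k : nat) (z : nat -> R) (i j : nat) : R :=
  sumR (S n) (fun p => sumR (S n) (fun q =>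
     proj n k z i p * phi_hess k p q * proj n k z q j))
  / vnorm (S n) (phi_grad k z).

Definition normA2 (n k : nat) (z : nat -> R) : R :=
  sumR (S n) (fun i => sumR (S n) (fun j => sff n k z i j ^ 2)).

Definition meanH (n k : nat) (z : nat -> R) : R :=
  sumR (S n) (fun i => sff n k z i i).

(* Laplace-Beltrami of (the restriction to Sigma of) an ambient function with
   gradient g and Hessian h at z:  tr(P Hess u P) - H <nu, grad u>. *)
Definition lapSigma (n k : nat) (z : nat -> R) (g : nat -> R) (h : nat -> nat -> R) : R :=
  sumR (S n) (fun i => sumR (S n) (fun j => proj n k z i j * h i j))
  - meanH n k z * sumR (S n) (fun i => nu n k z i * g i).

(* <x, grad_Sigma u> with x the position vector, grad_Sigma u = P grad u *)
Definition drift (n k : nat) (z : nat -> R) (g : nat -> R) : R :=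
  sumR (S n) (fun i => sumR (S n) (fun j => z i * proj n k z i j * g j)).

Definition Lop (n k : nat) (u : (nat -> R) -> R) (g : (nat -> R) -> nat -> R)
  (h : (nat -> R) -> nat -> nat -> R) (z : nat -> R) : R :=
  lapSigma n k z (g z) (h z) - / 2 * drift n k z (g z)
  + (normA2 n k z + / 2) * u z.

Definition is_C2 (n : nat) (u : (nat -> R) -> R) (g : (nat -> R) -> nat -> R)
  (h : (nat -> R) -> nat -> nat -> R) : Prop :=
  forall z, in_Rn1 n z -> forall i j, (i <= n)%nat -> (j <= n)%nat ->
    derivable_pt_lim (fun t => u (upd z i t)) 0 (g z i) /\
    derivable_pt_lim (fun t => g (upd z j t) i) 0 (h z i j) /\
    (forall eps, 0 < eps -> exists dlt, 0 < dlt /\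
       forall w, in_Rn1 n w -> (forall m, (m <= n)%nat -> Rabs (w m - z m) < dlt) ->
         Rabs (h w i j - h z i j) < eps).

Definition stable (n k : nat) (Omega : (nat -> R) -> Prop) : Prop :=
  exists u g h, is_C2 n u g h /\
    forall z, Omega z -> Lop n k u g h z = 0 /\ 0 < u z.

Definition hemi_half (n k : nat) (a b : nat -> R) (z : nat -> R) : Prop :=
  cylinder n k z /\
  0 < sumR (S k) (fun i => a i * z i) /\
  0 < sumR (n - k) (fun j => b j * z (S k + j)%nat).

(* Main.v *)
Require Import Defs.
From Stdlib Require Import Reals Lra Lia FunctionalExtensionality.
From Coquelicot Require Import Coquelicot.
Open Scope R_scope.

Lemma sumR_ext m f g : (forall i, (i < m)%nat -> f i = g i) -> sumR m f = sumR m g.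
Proof. induction m; simpl; intros H; [reflexivity|].
rewrite IHm by (intros; apply H; lia). rewrite H by lia. reflexivity. Qed.

Lemma sumR_plus m f g : sumR m (fun i => f i + g i) = sumR m f + sumR m g.
Proof. induction m; simpl; [ring|]. rewrite IHm; ring. Qed.
Lemma sumR_minus m f g : sumR m (fun i => f i - g i) = sumR m f - sumR m g.
Proof. induction m; simpl; [ring|]. rewrite IHm; ring. Qed.
Lemma sumR_scal m c f : sumR m (fun i => c * f i) = c * sumR m f.
Proof. induction m; simpl; [ring|]. rewrite IHm; ring. Qed.
Lemma sumR_zero m : sumR m (fun _ => 0) = 0.
Proof. induction m; simpl; [ring|]. rewrite IHm; ring. Qed.
Lemma sumR_one m : sumR m (fun _ => 1) = INR m.
Proof. induction m; cbn [sumR]; [simpl; ring|]. rewrite IHm, S_INR; ring. Qed.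
Lemma sumR_delta_gen m i f : sumR m (fun p => delta i p * f p) = if Nat.ltb i m then f i else 0.
Proof. induction m; cbn [sumR]. reflexivity. rewrite IHm. unfold delta.
destruct (Nat.eqb_spec i m); destruct (Nat.ltb_spec i m); destruct (Nat.ltb_spec i (S m));
try lia; subst; ring. Qed.
Lemma sumR_delta m i f : (i < m)%nat -> sumR m (fun p => delta i p * f p) = f i.
Proof. intros H. rewrite sumR_delta_gen. destruct (Nat.ltb_spec i m); [reflexivity|lia]. Qed.
Lemma sumR_trunc m p f : (p <= m)%nat -> (forall i, (p <= i < m)%nat -> f i = 0) -> sumR m f = sumR p f.
Proof. induction m; intros Hp H. replace p with 0%nat by lia; reflexivity.
destruct (Nat.eq_dec p (S m)). subst; reflexivity.
cbn [sumR]. rewrite IHm by (try lia; intros; apply H; lia). rewrite (H m) by lia. ring. Qed.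
Lemma sumR_shift p m f : sumR (p + m) f = sumR p f + sumR m (fun j => f (p + j)%nat).
Proof. induction m. rewrite Nat.add_0_r; simpl; ring.
rewrite Nat.add_succ_r; cbn [sumR]; rewrite IHm; ring. Qed.

Definition Dk (k i : nat) : R := if Nat.leb i k then 1 else 0.
Definition Xv k (z : nat -> R) i := Dk k i * z i.
Definition Av k (a : nat -> R) i := Dk k i * a i.
Definition Bv k (b : nat -> R) i := if Nat.leb (S k) i then b (i - S k)%nat else 0.
Definition Fz k a (z : nat -> R) := sumR (S k) (fun i => a i * z i).
Definition Gz n k b (z : nat -> R) := sumR (n - k) (fun j => b j * z (S k + j)%nat).

Ltac pw := unfold Xv, Av, Bv, Dk, delta, phi_grad, phi_hess in *;
  repeat (first [ rewrite Nat.eqb_refl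
    | match goal with
      | |- context [Nat.eqb ?x ?y] => destruct (Nat.eqb_spec x y); [try subst|]
      | |- context [Nat.leb ?x ?y] => destruct (Nat.leb_spec x y)
      end ]); cbv beta iota delta [andb] in *; try (exfalso; lia).

Section S.
Variables (n k : nat) (a b z : nat -> R).
Hypothesis Hkn : (k <= n)%nat.

Lemma sum_D : sumR (S n) (Dk k) = INR k + 1.
Proof. rewrite (sumR_trunc _ (S k)) by (try lia; intros; pw; ring).
rewrite (sumR_ext _ _ (fun _ => 1)) by (intros; pw; ring). rewrite sumR_one, S_INR; ring. Qed.

Lemma sum_X2 : cylinder n k z -> sumR (S n) (fun i => Xv k z i ^ 2) = 2 * INR k.
Proof. intros [_ H]. rewrite (sumR_trunc _ (S k)) by (try lia; intros; pw; ring).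
rewrite <- H. apply sumR_ext; intros; pw; ring. Qed.

Lemma dot_XA : sumR (S n) (fun i => Xv k z i * Av k a i) = Fz k a z.
Proof. unfold Fz. rewrite (sumR_trunc _ (S k)) by (try lia; intros; pw; ring).
apply sumR_ext; intros; pw; ring. Qed.
Lemma dot_zA : sumR (S n) (fun i => z i * Av k a i) = Fz k a z.
Proof. unfold Fz. rewrite (sumR_trunc _ (S k)) by (try lia; intros; pw; ring).
apply sumR_ext; intros; pw; ring. Qed.
Lemma dot_XB : sumR (S n) (fun i => Xv k z i * Bv k b i) = 0.
Proof. rewrite <- (sumR_zero (S n)). apply sumR_ext; intros; pw; ring. Qed.
Lemma dot_AB : sumR (S n) (fun i => Av k a i * Bv k b i) = 0.
Proof. rewrite <- (sumR_zero (S n)). apply sumR_ext; intros; pw; ring. Qed.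
Lemma dot_zB : sumR (S n) (fun i => z i * Bv k b i) = Gz n k b z.
Proof. unfold Gz. replace (S n) with (S k + (n - k))%nat by lia. rewrite sumR_shift.
rewrite (sumR_ext (S k) _ (fun _ => 0)) by (intros; pw; ring). rewrite sumR_zero.
rewrite Rplus_0_l. apply sumR_ext; intros j Hj. unfold Bv.
destruct (Nat.leb_spec (S k) (S k + j)); [|lia].
replace (S k + j - S k)%nat with j by lia. ring. Qed.
Lemma dot_zX : cylinder n k z -> sumR (S n) (fun i => z i * Xv k z i) = 2 * INR k.
Proof. intros H. rewrite <- (sum_X2 H). apply sumR_ext; intros; pw; ring. Qed.
End S.

Section S.
Variables (n k : nat) (z : nat -> R).
Hypothesis Hkn : (k <= n)%nat.
Hypothesis Hk1 : (1 <= k)%nat.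
Hypothesis Hcyl : cylinder n k z.

Lemma INRk_pos : 1 <= INR k.
Proof. replace 1 with (INR 1) by reflexivity. apply le_INR; lia. Qed.

Lemma vn_sq : vnorm (S n) (phi_grad k z) * vnorm (S n) (phi_grad k z) = 8 * INR k.
Proof. unfold vnorm. rewrite sqrt_sqrt.
rewrite (sumR_ext _ _ (fun i => 4 * Xv k z i ^ 2)) by (intros; pw; ring).
rewrite sumR_scal, sum_X2 by auto. ring.
rewrite (sumR_ext _ _ (fun i => 4 * Xv k z i ^ 2)) by (intros; pw; ring).
rewrite sumR_scal, sum_X2 by auto. pose proof INRk_pos; lra. Qed.

Lemma vn_pos : 0 < vnorm (S n) (phi_grad k z).
Proof. pose proof vn_sq. pose proof INRk_pos. unfold vnorm in *.
pose proof (sqrt_pos (sumR (S n) (fun i : nat => phi_grad k z i ^ 2))).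
destruct H1; auto. rewrite <- H1 in H. lra. Qed.

Lemma nu_eq i : nu n k z i = 2 * Xv k z i / vnorm (S n) (phi_grad k z).
Proof. unfold nu. f_equal. pw; ring. Qed.

Lemma sff_eq i j : (i < S n)%nat -> (j < S n)%nat ->
  let c := vnorm (S n) (phi_grad k z) in
  sff n k z i j = 2 * (delta i j * Dk k i - 4 / (c*c) * Xv k z i * Xv k z j) / c.
Proof. intros Hi Hj c. pose proof vn_sq as Hc2. pose proof vn_pos as Hc. fold c in Hc2, Hc.
assert (Hc0 : c <> 0) by lra.
unfold sff. fold c. f_equal.
rewrite (sumR_ext _ _ (fun p => proj n k z i p * (2 * Dk k p) * proj n k z p j)).
2:{ intros p Hp. rewrite (sumR_ext _ _ (fun q => delta p q * (proj n k z i p * (2 * Dk k p) * proj n k z q j))).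
  apply sumR_delta; auto. intros q Hq. pw; ring. }
rewrite (sumR_ext _ _ (fun p => 2 * (delta i p * (Dk k p * delta j p))
   - (8/(c*c) * Xv k z i) * (delta j p * Xv k z p)
   - (8/(c*c) * Xv k z j) * (delta i p * Xv k z p)
   + (32/(c*c*c*c) * Xv k z i * Xv k z j) * (Xv k z p ^ 2))).
2:{ intros p Hp. unfold proj. rewrite !nu_eq. fold c. pw; field; auto. }
rewrite sumR_plus, !sumR_minus, !sumR_scal, !sumR_delta by auto.
rewrite sum_X2 by auto.
replace (delta j i) with (delta i j) by (pw; reflexivity).
replace (INR k) with (c*c/8) by lra. field. auto. Qed.
End S.

Definition uf n k a b (z : nat -> R) := Fz k a z * Gz n k b z.
Definition gf n k a b (z : nat -> R) i := Av k a i * Gz n k b z + Bv k b i * Fz k a z.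
Definition hf k a b (z : nat -> R) i j := Av k a i * Bv k b j + Bv k b i * Av k a j.

Section S.
Variables (n k : nat) (a b z : nat -> R).
Hypothesis Hkn : (k <= n)%nat.
Hypothesis Hk1 : (1 <= k)%nat.
Hypothesis Hcyl : cylinder n k z.

Lemma normA2_eq : normA2 n k z = / 2.
Proof. pose proof (vn_sq n k z Hkn Hk1 Hcyl) as Hc2. pose proof (vn_pos n k z Hkn Hk1 Hcyl) as Hc.
set (c := vnorm (S n) (phi_grad k z)) in *.
assert (Hc0 : c <> 0) by lra.
unfold normA2.
rewrite (sumR_ext _ _ (fun i => 4/(c*c) * Dk k i - (32/(c*c*c*c)) * Xv k z i ^ 2
   + (64/(c*c*c*c*c*c)) * (2 * INR k) * Xv k z i ^ 2)).
2:{ intros i Hi.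
  rewrite (sumR_ext _ _ (fun j => 4/(c*c) * (delta i j * Dk k i) - (32/(c*c*c*c) * Xv k z i) * (delta i j * Xv k z j)
   + (64/(c*c*c*c*c*c) * Xv k z i ^ 2) * (Xv k z j ^ 2))).
  2:{ intros j Hj. rewrite sff_eq by auto. fold c. pw; field; auto. }
  rewrite sumR_plus, sumR_minus, !sumR_scal.
  rewrite (sumR_delta _ _ (fun _ => Dk k i)) by auto.
  rewrite sumR_delta by auto. rewrite sum_X2 by auto. ring. }
rewrite sumR_plus, sumR_minus, !sumR_scal, sum_D, sum_X2 by auto.
replace (INR k) with (c*c/8) by lra. field. auto. Qed.

Lemma meanH_eq : meanH n k z = 2 * INR k / vnorm (S n) (phi_grad k z).
Proof. pose proof (vn_sq n k z Hkn Hk1 Hcyl) as Hc2. pose proof (vn_pos n k z Hkn Hk1 Hcyl) as Hc.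
set (c := vnorm (S n) (phi_grad k z)) in *.
assert (Hc0 : c <> 0) by lra.
unfold meanH.
rewrite (sumR_ext _ _ (fun i => 2/c * Dk k i - 8/(c*c*c) * Xv k z i ^ 2)).
2:{ intros i Hi. rewrite sff_eq by auto. fold c. pw; field; auto. }
rewrite sumR_minus, !sumR_scal, sum_D, sum_X2 by auto.
replace (INR k) with (c*c/8) by lra. field. auto. Qed.

Lemma Lop_zero : Lop n k (uf n k a b) (gf n k a b) (hf k a b) z = 0.
Proof. pose proof (vn_sq n k z Hkn Hk1 Hcyl) as Hc2. pose proof (vn_pos n k z Hkn Hk1 Hcyl) as Hc.
unfold Lop. rewrite normA2_eq. unfold lapSigma. rewrite meanH_eq.
set (c := vnorm (S n) (phi_grad k z)) in *.
assert (Hc0 : c <> 0) by lra.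
set (F := Fz k a z) in *. set (G := Gz n k b z) in *.
rewrite (sumR_ext _ _ (fun i => 2 * (Av k a i * Bv k b i)
   - (4/(c*c) * G) * (Xv k z i * Bv k b i) - (4/(c*c) * F) * (Xv k z i * Bv k b i))).
2:{ intros i Hi.
  rewrite (sumR_ext _ _ (fun j => Av k a i * (delta i j * Bv k b j) + Bv k b i * (delta i j * Av k a j)
    - (4/(c*c) * Xv k z i * Av k a i) * (Xv k z j * Bv k b j)
    - (4/(c*c) * Xv k z i * Bv k b i) * (Xv k z j * Av k a j))).
  2:{ intros j Hj. unfold proj, hf. rewrite !nu_eq by auto. fold c. pw; field; auto. }
  rewrite !sumR_minus, sumR_plus, !sumR_scal, !sumR_delta by auto.
  rewrite dot_XB, dot_XA by auto. fold F. unfold Xv, Av, Bv, Dk.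
  destruct (Nat.leb_spec i k); destruct (Nat.leb_spec (S k) i); try lia; ring. }
rewrite !sumR_minus, !sumR_scal, dot_AB, dot_XB by auto.
rewrite (sumR_ext _ _ (fun i => (2/c * G) * (Xv k z i * Av k a i) + (2/c * F) * (Xv k z i * Bv k b i))).
2:{ intros i Hi. unfold gf. rewrite nu_eq by auto. fold c F G. field; auto. }
rewrite sumR_plus, !sumR_scal, dot_XA, dot_XB by auto. fold F.
unfold drift.
rewrite (sumR_ext _ _ (fun i => z i * gf n k a b z i - (4/(c*c) * (G * F + F * 0)) * (z i * Xv k z i))).
2:{ intros i Hi.
  rewrite (sumR_ext _ _ (fun j => z i * (delta i j * gf n k a b z j)
    - (4/(c*c) * z i * Xv k z i) * (G * (Xv k z j * Av k a j) + F * (Xv k z j * Bv k b j)))).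
  2:{ intros j Hj. unfold proj, gf. rewrite !nu_eq by auto. fold c F G. pw; field; auto. }
  rewrite sumR_minus, !sumR_scal, sumR_delta, sumR_plus, !sumR_scal, dot_XA, dot_XB by auto.
  fold F. ring. }
rewrite sumR_minus, sumR_scal, dot_zX by auto.
unfold gf.
rewrite (sumR_ext _ _ (fun i => G * (z i * Av k a i) + F * (z i * Bv k b i))) by (intros; unfold F, G; ring).
rewrite sumR_plus, !sumR_scal, dot_zA, dot_zB by auto. fold F G.
unfold uf. fold F G.
replace (INR k) with (c*c/8) by lra. field. auto. Qed.
End S.

Lemma dq p q r s : derivable_pt_lim (fun t => (p + t*q)*(r + t*s)) 0 (q*r + p*s).
Proof. apply is_derive_Reals. auto_derive; auto. ring. Qed.
Lemma dl p q : derivable_pt_lim (fun t => p + t*q) 0 q.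
Proof. apply is_derive_Reals. auto_derive; auto. ring. Qed.

Lemma F_upd k a z i t : Fz k a (upd z i t) = Fz k a z + t * Av k a i.
Proof. unfold Fz.
rewrite (sumR_ext _ _ (fun p => a p * z p + t * (delta i p * a p))) by (intros; unfold upd; pw; ring).
rewrite sumR_plus, sumR_scal, sumR_delta_gen. unfold Av, Dk.
destruct (Nat.ltb_spec i (S k)); destruct (Nat.leb_spec i k); try lia; ring. Qed.

Lemma G_upd n k b z i t : (i <= n)%nat -> Gz n k b (upd z i t) = Gz n k b z + t * Bv k b i.
Proof. intros Hi. unfold Gz.
rewrite (sumR_ext _ _ (fun j => b j * z (S k + j)%nat + t * (b j * delta i (S k + j)))) by (intros; unfold upd; pw; ring).
rewrite sumR_plus, sumR_scal. f_equal. f_equal.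
unfold Bv. destruct (Nat.leb_spec (S k) i).
- rewrite (sumR_ext _ _ (fun j => delta (i - S k) j * b j)).
  apply sumR_delta; lia. intros j Hj. unfold delta.
  destruct (Nat.eqb_spec i (S k + j)); destruct (Nat.eqb_spec (i - S k) j); try lia; ring.
- rewrite <- (sumR_zero (n - k)). apply sumR_ext; intros j Hj. unfold delta.
  destruct (Nat.eqb_spec i (S k + j)); try lia; ring. Qed.

Theorem proposition4p3 (n k : nat) (a b : nat -> R) :
  (1 <= k)%nat -> (k <= n - 1)%nat ->
  (exists i, (i <= k)%nat /\ a i <> 0) ->
  (exists j, (j < n - k)%nat /\ b j <> 0) ->
  stable n k (hemi_half n k a b).
Proof.
intros Hk1 Hkn _ _. assert (Hk : (k <= n)%nat) by lia.
exists (uf n k a b), (gf n k a b), (hf k a b). split.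
- intros z _ i j Hi Hj. split; [|split].
  + replace (fun t => uf n k a b (upd z i t)) with
      (fun t => (Fz k a z + t * Av k a i) * (Gz n k b z + t * Bv k b i)).
    replace (gf n k a b z i) with (Av k a i * Gz n k b z + Fz k a z * Bv k b i) by (unfold gf; ring).
    apply dq.
    apply functional_extensionality; intros t. unfold uf. rewrite F_upd, G_upd by auto. reflexivity.
  + replace (fun t => gf n k a b (upd z j t) i) with
      (fun t => (Av k a i * Gz n k b z + Bv k b i * Fz k a z) + t * (hf k a b z i j)).
    apply dl.
    apply functional_extensionality; intros t. unfold gf, hf. rewrite F_upd, G_upd by auto. ring.
  + intros eps Heps. exists 1. split; [lra|]. intros w _ _. unfold hf.
    rewrite Rminus_diag, Rabs_R0. exact Heps.
- intros z [Hcyl [HF HG]]. split.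
  + apply Lop_zero; auto.
  + unfold uf, Fz, Gz. apply Rmult_lt_0_compat; auto.
Qed.
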